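(* There exists an absolute constant $\delta>0$ such that for every $t\in[0,1]$ and every integer $m\ge0$ the following hold. (i) For every $z\in\mathbb C$ with $|\operatorname{Im}z|\le\delta$ there is $k_0\in\{0,\dots,m\}$ with $|\Phi_{k_0}(z)|\ge3^{-m}$. (ii) For every $x_0\in\mathbb R$, with $R=[x_0-\delta,x_0+\delta]\times[-\delta,\delta]\subset\mathbb C$, there is at most one index $k_0\in\{0,\dots,m\}$ which is critical for $R$, where $k_0$ is called critical for $R$ if there is $z_0\in R$ with $|\tilde\varphi_{k_0}(z_0)|<3^{-m}$.
   Context: For fixed $t\in[0,1]$: $\tilde\varphi(z)=1+e^{-iz}+e^{-itz}$, $\tilde\varphi_k(z)=\tilde\varphi(3^{-k}z)$ for integers $k\ge0$, $\Phi(z)=\prod_{k=0}^m\tilde\varphi_k(z)$, and $\Phi_{k_0}(z)=\prod_{k\in\{0,\dots,m\}\setminus\{k_0\}}\tilde\varphi_k(z)$. *)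

(* Defs.v *)
From Stdlib Require Import Reals List Arith.
Open Scope R_scope.

Definition Cpx : Type := (R * R)%type.
Definition Re (z : Cpx) : R := fst z.
Definition Im (z : Cpx) : R := snd z.
Definition C1 : Cpx := (1, 0).
Definition Cadd (a b : Cpx) : Cpx := (fst a + fst b, snd a + snd b).
Definition Cmul (a b : Cpx) : Cpx :=
  (fst a * fst b - snd a * snd b, fst a * snd b + snd a * fst b).
Definition Cscale (r : R) (z : Cpx) : Cpx := (r * fst z, r * snd z).
Definition Cnorm (z : Cpx) : R := sqrt (fst z * fst z + snd z * snd z).
Definition Cexp (z : Cpx) : Cpx := (exp (fst z) * cos (snd z), exp (fst z) * sin (snd z)).
(* -i * z  for z = x + i y  equals  y - i x *)
Definition Cmul_negI (z : Cpx) : Cpx := (snd z, - fst z).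

(* phi~(z) = 1 + e^{-iz} + e^{-itz} *)
Definition phit (t : R) (z : Cpx) : Cpx :=
  Cadd C1 (Cadd (Cexp (Cmul_negI z)) (Cexp (Cmul_negI (Cscale t z)))).

Definition phik (t : R) (k : nat) (z : Cpx) : Cpx := phit t (Cscale (/ 3 ^ k) z).

(* Phi_{k0}(z) = prod_{k in {0..m} \ {k0}} phi~_k(z) *)
Definition Phi_except (t : R) (m k0 : nat) (z : Cpx) : Cpx :=
  fold_right Cmul C1
    (map (fun k => phik t k z) (filter (fun k => negb (Nat.eqb k k0)) (seq 0 (S m)))).

Definition critical (t : R) (m : nat) (x0 delta : R) (k0 : nat) : Prop :=
  exists z0 : Cpx,
    x0 - delta <= Re z0 <= x0 + delta /\ - delta <= Im z0 <= delta /\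
    Cnorm (phik t k0 z0) < / 3 ^ m.

(* Main.v *)
Require Import Defs.
From Stdlib Require Import Reals List Arith.
From Stdlib Require Import Lra Lia Psatz Classical Ratan.
Open Scope R_scope.

Definition Csub (a b : Cpx) : Cpx := (fst a - fst b, snd a - snd b).
Definition N2 (z : Cpx) : R := fst z * fst z + snd z * snd z.

Lemma N2_nonneg z : 0 <= N2 z.
Proof. unfold N2; nra. Qed.

Lemma Cnorm_nonneg z : 0 <= Cnorm z.
Proof. unfold Cnorm; apply sqrt_pos. Qed.

Lemma Cnorm_sq z : Cnorm z * Cnorm z = N2 z.
Proof. unfold Cnorm; rewrite sqrt_sqrt; [reflexivity| apply N2_nonneg]. Qed.

Lemma le_of_sq x y : 0 <= y -> x * x <= y * y -> x <= y.
Proof. intros. nra. Qed.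

Lemma Cnorm_le_iff z r : 0 <= r -> N2 z <= r * r -> Cnorm z <= r.
Proof. intros. apply le_of_sq; auto. rewrite Cnorm_sq; auto. Qed.

Lemma Cnorm_ge z r : 0 <= r -> r * r <= N2 z -> r <= Cnorm z.
Proof. intros. apply le_of_sq. apply Cnorm_nonneg. rewrite Cnorm_sq; auto. Qed.

Lemma Cnorm_mul a b : Cnorm (Cmul a b) = Cnorm a * Cnorm b.
Proof.
  unfold Cnorm. rewrite <- sqrt_mult by nra. f_equal. destruct a, b; simpl; ring.
Qed.

Lemma Cnorm_add a b : Cnorm (Cadd a b) <= Cnorm a + Cnorm b.
Proof.
  apply Cnorm_le_iff. pose proof (Cnorm_nonneg a); pose proof (Cnorm_nonneg b); lra.
  pose proof (Cnorm_sq a); pose proof (Cnorm_sq b).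
  pose proof (Cnorm_nonneg a); pose proof (Cnorm_nonneg b).
  destruct a as [a1 a2], b as [b1 b2]; unfold N2 in *; cbn [fst snd] in *.
  assert (HL: (a1*b1+a2*b2)*(a1*b1+a2*b2) <= (Cnorm (a1,a2) * Cnorm (b1,b2)) * (Cnorm (a1,a2) * Cnorm (b1,b2))).
  { replace ((Cnorm (a1,a2) * Cnorm (b1,b2)) * (Cnorm (a1,a2) * Cnorm (b1,b2)))
      with ((Cnorm (a1,a2) * Cnorm (a1,a2)) * (Cnorm (b1,b2) * Cnorm (b1,b2))) by ring.
    rewrite H, H0. pose proof (Rle_0_sqr (a1*b2-a2*b1)); unfold Rsqr in *; nra. }
  assert (a1*b1+a2*b2 <= Cnorm (a1,a2) * Cnorm (b1,b2)).
  { apply le_of_sq; [apply Rmult_le_pos; auto | exact HL]. }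
  replace ((Cnorm (a1, a2) + Cnorm (b1, b2)) * (Cnorm (a1, a2) + Cnorm (b1, b2))) with
    (Cnorm (a1, a2) * Cnorm (a1, a2) + 2 * (Cnorm (a1, a2) * Cnorm (b1, b2)) + Cnorm (b1, b2) * Cnorm (b1, b2)) by ring.
  rewrite H, H0.
  assert (E: (a1+b1)*(a1+b1)+(a2+b2)*(a2+b2) = (a1*a1+a2*a2) + 2*(a1*b1+a2*b2) + (b1*b1+b2*b2)) by ring.
  simpl. rewrite E. lra.
Qed.

Lemma Cnorm_sub_le a b : Cnorm (Csub a b) <= Cnorm a + Cnorm b.
Proof.
  replace (Csub a b) with (Cadd a (Cscale (-1) b)).
  2:{ destruct a, b; unfold Csub, Cadd, Cscale; simpl; f_equal; ring. }
  eapply Rle_trans. apply Cnorm_add.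
  assert (Cnorm (Cscale (-1) b) = Cnorm b) as ->; [|lra].
  unfold Cnorm; f_equal; destruct b; simpl; ring.
Qed.

Lemma Cnorm_scale r z : Cnorm (Cscale r z) = Rabs r * Cnorm z.
Proof.
  unfold Cnorm. rewrite <- (sqrt_Rsqr (Rabs r)) by apply Rabs_pos.
  rewrite <- sqrt_mult. f_equal. rewrite <- Rsqr_abs. unfold Rsqr. destruct z; simpl; ring.
  apply Rle_0_sqr. nra.
Qed.

Lemma Cnorm_real r : Cnorm (r, 0) = Rabs r.
Proof.
  unfold Cnorm; simpl. replace (r * r + 0 * 0) with (Rsqr r) by (unfold Rsqr; ring).
  apply sqrt_Rsqr_abs.
Qed.

Lemma Cnorm_C1 : Cnorm Defs.C1 = 1.
Proof. unfold Defs.C1. rewrite Cnorm_real. apply Rabs_R1. Qed.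

Lemma Cnorm_add_ge a b : Cnorm a - Cnorm b <= Cnorm (Cadd a b).
Proof.
  pose proof (Cnorm_sub_le (Cadd a b) b).
  replace (Csub (Cadd a b) b) with a in H by (destruct a, b; unfold Csub, Cadd; simpl; f_equal; ring).
  lra.
Qed.

Lemma Cnorm_sub_ge a b : Cnorm a - Cnorm b <= Cnorm (Csub a b).
Proof.
  pose proof (Cnorm_add (Csub a b) b).
  replace (Cadd (Csub a b) b) with a in H by (destruct a, b; unfold Csub, Cadd; simpl; f_equal; ring).
  lra.
Qed.

Lemma Cnorm_sub_sym a b : Cnorm (Csub a b) = Cnorm (Csub b a).
Proof. unfold Cnorm; f_equal; destruct a, b; unfold Csub; simpl; ring. Qed.

Definition zeta (th : R) : Cpx := (cos th, sin th).
Definition E (a th : R) : Cpx := (exp a * cos th, exp a * sin th).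
Definition Dq (th : R) : R := 2 - 2 * cos th.

Lemma sc1 x : sin x * sin x + cos x * cos x = 1.
Proof. pose proof (sin2_cos2 x). unfold Rsqr in H. lra. Qed.

Lemma cos_le1 x : -1 <= cos x <= 1.
Proof. apply COS_bound. Qed.

Lemma E_mul a b th ph : Cmul (E a th) (E b ph) = E (a + b) (th + ph).
Proof.
  unfold E, Cmul; simpl. rewrite exp_plus, cos_plus, sin_plus. f_equal; ring.
Qed.

Lemma Cnorm_E a th : Cnorm (E a th) = exp a.
Proof.
  unfold Cnorm, E; simpl.
  replace (exp a * cos th * (exp a * cos th) + exp a * sin th * (exp a * sin th))
    with (Rsqr (exp a)) by (unfold Rsqr; pose proof (sc1 th); nra).
  apply sqrt_Rsqr. left; apply exp_pos.
Qed.

Lemma N2_zeta_sub1 th : N2 (Csub (zeta th) Defs.C1) = Dq th.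
Proof. unfold N2, Csub, zeta, Defs.C1, Dq; simpl. pose proof (sc1 th). nra. Qed.

Lemma Cnorm_zeta_sub1 th : Cnorm (Csub (zeta th) Defs.C1) = sqrt (Dq th).
Proof. unfold Cnorm. rewrite <- N2_zeta_sub1. reflexivity. Qed.

Lemma Dq_nonneg th : 0 <= Dq th.
Proof. unfold Dq; pose proof (cos_le1 th); lra. Qed.

Lemma cos3 x : cos (3 * x) = 4 * cos x ^ 3 - 3 * cos x.
Proof.
  replace (3 * x) with (x + x + x) by ring.
  rewrite cos_plus, cos_plus, sin_plus.
  assert (H0: sin x * sin x = 1 - cos x * cos x) by (pose proof (sc1 x); lra).
  transitivity (cos x * cos x * cos x - 3 * (sin x * sin x) * cos x). ring.
  rewrite H0. ring.
Qed.

Lemma Dq3_eq x : Dq (3 * x) = (1 + 2 * cos x) ^ 2 * (3 - (1 + 2 * cos x)).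
Proof. unfold Dq. rewrite cos3. ring. Qed.

Lemma Dq3 x : Dq (3 * x) <= 9 * Dq x.
Proof.
  rewrite Dq3_eq. unfold Dq. pose proof (cos_le1 x).
  replace (3 - (1 + 2 * cos x)) with (2 - 2 * cos x) by ring.
  apply Rmult_le_compat_r. lra. simpl. nra.
Qed.

Lemma Dq_pow j x : Dq (3 ^ j * x) <= 9 ^ j * Dq x.
Proof.
  induction j.
  - simpl. rewrite Rmult_1_l. lra.
  - replace (3 ^ S j * x) with (3 * (3 ^ j * x)) by (simpl; ring).
    eapply Rle_trans. apply Dq3.
    replace (9 ^ S j) with (9 * 9 ^ j) by (simpl; ring).
    pose proof (pow_lt 9 j ltac:(lra)). nra.
Qed.

Lemma near_zero th1 th2 e :
  Cnorm (Cadd Defs.C1 (Cadd (zeta th1) (zeta th2))) <= e -> e < 1 ->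
  (1 - e) * Rabs (1 + 2 * cos th1) <= 2 * e + e * e.
Proof.
  intros He He1.
  pose proof (Cnorm_nonneg (Cadd Defs.C1 (Cadd (zeta th1) (zeta th2)))) as Hn.
  pose proof (Cnorm_sq (Cadd Defs.C1 (Cadd (zeta th1) (zeta th2)))) as Hsq.
  set (nn := Cnorm (Cadd Defs.C1 (Cadd (zeta th1) (zeta th2)))) in *.
  unfold N2, Cadd, Defs.C1, zeta in Hsq; cbn [fst snd] in Hsq.
  set (s1 := 1 + (cos th1 + cos th2)) in *.
  set (s2 := 0 + (sin th1 + sin th2)) in *.
  set (c1 := cos th1) in *. set (c2 := cos th2) in *.
  set (d1 := sin th1) in *. set (d2 := sin th2) in *.
  assert (U1 : d1 * d1 + c1 * c1 = 1) by apply sc1.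
  assert (U2 : d2 * d2 + c2 * c2 = 1) by apply sc1.
  set (w := 1 + 2 * c1).
  assert (Hw : w = 2 * (s1 * (1 + c1) + s2 * d1) - (s1 * s1 + s2 * s2)).
  { unfold w, s1, s2.
    replace (2 * ((1 + (c1 + c2)) * (1 + c1) + (0 + (d1 + d2)) * d1) -
      ((1 + (c1 + c2)) * (1 + (c1 + c2)) + (0 + (d1 + d2)) * (0 + (d1 + d2))))
    with (1 + 2 * c1 + (d1 * d1 + c1 * c1 - 1) - (d2 * d2 + c2 * c2 - 1)) by ring.
    rewrite U1, U2. ring. }
  assert (He2 : s1 * s1 + s2 * s2 <= e * e) by (rewrite <- Hsq; apply Rmult_le_compat; lra).
  assert (Hc1 : -1 <= c1 <= 1) by apply cos_le1.
  (* Cauchy-Schwarz *)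
  assert (CS : (s1 * (1 + c1) + s2 * d1) * (s1 * (1 + c1) + s2 * d1) <= (e * (1 + w / 2)) * (e * (1 + w / 2))).
  { assert (A1: (s1 * (1 + c1) + s2 * d1) * (s1 * (1 + c1) + s2 * d1) <=
              (s1 * s1 + s2 * s2) * ((1 + c1) * (1 + c1) + d1 * d1)).
    { pose proof (Rle_0_sqr (s1 * d1 - s2 * (1 + c1))). unfold Rsqr in *. nra. }
    assert (A2: (1 + c1) * (1 + c1) + d1 * d1 = 1 + w).
    { unfold w. replace ((1 + c1) * (1 + c1) + d1 * d1) with (1 + 2 * c1 + (d1 * d1 + c1 * c1)) by ring.
      rewrite U1. ring. }
    rewrite A2 in A1.
    assert (A3: 1 + w <= (1 + w / 2) * (1 + w / 2)) by nra.
    assert (0 <= 1 + w) by (unfold w; lra).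
    assert (0 <= e) by lra.
    assert (A4: (s1 * s1 + s2 * s2) * (1 + w) <= (e * e) * ((1 + w / 2) * (1 + w / 2))).
    { apply Rmult_le_compat; nra. }
    nra. }
  assert (CS2 : Rabs (s1 * (1 + c1) + s2 * d1) <= e * (1 + w / 2)).
  { apply le_of_sq. apply Rmult_le_pos; unfold w; lra.
    rewrite <- Rabs_mult, Rabs_right; [exact CS | apply Rle_ge, Rle_0_sqr]. }
  assert (Hw2 : Rabs w <= 2 * Rabs (s1 * (1 + c1) + s2 * d1) + (s1 * s1 + s2 * s2)).
  { rewrite Hw at 1. unfold Rminus. eapply Rle_trans; [apply Rabs_triang|].
    rewrite Rabs_mult, Rabs_Ropp, (Rabs_right 2) by lra.
    rewrite (Rabs_right (s1 * s1 + s2 * s2)). lra. apply Rle_ge. nra. }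
  assert (0 <= e) by lra.
  assert (e * w <= e * Rabs w) by (apply Rmult_le_compat_l; [lra | apply Rle_abs]).
  fold w. nra.
Qed.


Lemma exp_sub1 a : Rabs a <= 1/2 -> Rabs (exp a - 1) <= 2 * Rabs a.
Proof.
  intros Ha.
  pose proof (exp_ineq1_le a) as H1.
  pose proof (exp_ineq1_le (-a)) as H2.
  assert (Hm : exp a * exp (-a) = 1) by (rewrite <- exp_plus; replace (a + - a) with 0 by ring; apply exp_0).
  pose proof (exp_pos a).
  destruct (Rle_dec 0 a) as [Hp|Hn].
  - rewrite Rabs_right by lra. rewrite Rabs_right in Ha by lra.
    rewrite Rabs_right by lra.
    assert (exp a * (1 - a) <= 1) by (rewrite <- Hm; apply Rmult_le_compat_l; lra).
    nra.
  - assert (exp a <= 1).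
    { assert (exp a * 1 <= exp a * exp (-a)) by (apply Rmult_le_compat_l; lra). lra. }
    rewrite (Rabs_left a) by lra. rewrite Rabs_left in Ha by lra.
    rewrite Rabs_left1 by lra. lra.
Qed.

Lemma Cnorm_zeta th : Cnorm (zeta th) = 1.
Proof.
  unfold Cnorm, zeta; simpl. rewrite Rplus_comm, sc1. apply sqrt_1.
Qed.

Lemma E_zeta a th : E a th = Cscale (exp a) (zeta th).
Proof. reflexivity. Qed.

Lemma E_sub1 a th :
  Cnorm (Csub (E a th) Defs.C1) <= exp a * sqrt (Dq th) + Rabs (exp a - 1).
Proof.
  replace (Csub (E a th) Defs.C1) with
    (Cadd (Cscale (exp a) (Csub (zeta th) Defs.C1)) (exp a - 1, 0)).
  2:{ unfold E, Cadd, Cscale, Csub, zeta, Defs.C1; simpl; f_equal; ring. }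
  eapply Rle_trans. apply Cnorm_add.
  rewrite Cnorm_scale, Cnorm_zeta_sub1, Cnorm_real.
  rewrite (Rabs_right (exp a)) by (left; apply exp_pos). lra.
Qed.

Lemma S3_ge u v :
  3 - Cnorm (Csub u Defs.C1) - Cnorm (Csub v Defs.C1) <= Cnorm (Cadd Defs.C1 (Cadd u v)).
Proof.
  replace (Cadd Defs.C1 (Cadd u v)) with
    (Cadd (3, 0) (Cadd (Csub u Defs.C1) (Csub v Defs.C1))).
  2:{ destruct u, v; unfold Cadd, Csub, Defs.C1; simpl; f_equal; ring. }
  pose proof (Cnorm_add_ge (3,0) (Cadd (Csub u Defs.C1) (Csub v Defs.C1))).
  pose proof (Cnorm_add (Csub u Defs.C1) (Csub v Defs.C1)).
  rewrite Cnorm_real, Rabs_right in H by lra. lra.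
Qed.

Lemma perturb a1 a2 th1 th2 :
  Cnorm (Cadd Defs.C1 (Cadd (zeta th1) (zeta th2))) <=
  Cnorm (Cadd Defs.C1 (Cadd (E a1 th1) (E a2 th2))) + Rabs (exp a1 - 1) + Rabs (exp a2 - 1).
Proof.
  replace (Cadd Defs.C1 (Cadd (zeta th1) (zeta th2))) with
    (Csub (Csub (Cadd Defs.C1 (Cadd (E a1 th1) (E a2 th2))) (Cscale (exp a1 - 1) (zeta th1)))
       (Cscale (exp a2 - 1) (zeta th2))).
  2:{ unfold Csub, Cadd, Cscale, E, zeta, Defs.C1; simpl; f_equal; ring. }
  eapply Rle_trans. apply Cnorm_sub_le.
  eapply Rle_trans. apply Rplus_le_compat_r. apply Cnorm_sub_le.
  rewrite !Cnorm_scale, !Cnorm_zeta. lra.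
Qed.

Lemma sin_abs_le y : Rabs y <= 1 -> Rabs (sin y) <= Rabs y.
Proof.
  intros Hy.
  assert (HPI : 2 < PI) by (pose proof PI2_1; lra).
  assert (K: forall y, 0 <= y <= 1 -> 0 <= sin y <= y).
  { intros x Hx. split. apply sin_ge_0; lra.
    destruct (Req_dec x 0) as [->|Hx0]. rewrite sin_0; lra.
    left; apply sin_lt_x; lra. }
  destruct (Rle_dec 0 y).
  - rewrite (Rabs_right y) in * by lra. specialize (K y ltac:(lra)).
    rewrite Rabs_right by lra. lra.
  - rewrite (Rabs_left y) in * by lra. specialize (K (-y) ltac:(lra)).
    rewrite sin_neg in K. rewrite Rabs_left1 by lra. lra.
Qed.

Lemma Rabs_half x : Rabs (x / 2) = Rabs x / 2.
Proof. unfold Rdiv. rewrite Rabs_mult, Rabs_inv, (Rabs_right 2) by lra. reflexivity. Qed.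

Lemma zeta_lip th1 th2 : Rabs (th1 - th2) <= 1 ->
  Cnorm (Csub (zeta th1) (zeta th2)) <= Rabs (th1 - th2).
Proof.
  intros H. apply Cnorm_le_iff. apply Rabs_pos.
  unfold N2, Csub, zeta; simpl.
  assert (E1: (cos th1 - cos th2) * (cos th1 - cos th2) + (sin th1 - sin th2) * (sin th1 - sin th2)
              = 2 - 2 * cos (th1 - th2)).
  { rewrite cos_minus. pose proof (sc1 th1); pose proof (sc1 th2). nra. }
  rewrite E1.
  set (x := th1 - th2) in *.
  replace x with (2 * (x / 2)) at 1 by field.
  rewrite cos_2a_sin.
  assert (Rabs (sin (x/2)) <= Rabs (x/2)).
  { apply sin_abs_le. rewrite Rabs_half. lra. }
  assert (Rabs (x/2) = Rabs x / 2) by apply Rabs_half.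
  assert (Hs: sin (x/2) * sin (x/2) = Rabs (sin (x/2)) * Rabs (sin (x/2))).
  { rewrite <- Rabs_mult. rewrite Rabs_right. reflexivity. apply Rle_ge, Rle_0_sqr. }
  rewrite H1 in H0. pose proof (Rabs_pos (sin (x/2))).
  assert (Hx2: x * x = Rabs x * Rabs x).
  { rewrite <- Rabs_mult. rewrite Rabs_right. reflexivity. apply Rle_ge, Rle_0_sqr. }
  nra.
Qed.

Definition S3 a1 th1 a2 th2 : Cpx := Cadd Defs.C1 (Cadd (E a1 th1) (E a2 th2)).

Definition LA1 (z : Cpx) n := / 3 ^ n * snd z.
Definition LT1 (z : Cpx) n := - (/ 3 ^ n * fst z).
Definition LA2 t (z : Cpx) n := t * (/ 3 ^ n * snd z).
Definition LT2 t (z : Cpx) n := - (t * (/ 3 ^ n * fst z)).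

Lemma phik_eq t n z : phik t n z = S3 (LA1 z n) (LT1 z n) (LA2 t z n) (LT2 t z n).
Proof. reflexivity. Qed.

Lemma pow3_pos n : 0 < 3 ^ n.
Proof. apply pow_lt; lra. Qed.

Lemma inv_pow_sub j n : (j <= n)%nat -> / 3 ^ (n - j) = 3 ^ j * / 3 ^ n.
Proof.
  intros H. replace n with ((n - j) + j)%nat at 2 by lia.
  rewrite pow_add. pose proof (pow3_pos (n-j)); pose proof (pow3_pos j).
  field. split; lra.
Qed.

Lemma phik_level t n j z : (j <= n)%nat ->
  phik t (n - j) z = S3 (3 ^ j * LA1 z n) (3 ^ j * LT1 z n) (3 ^ j * LA2 t z n) (3 ^ j * LT2 t z n).
Proof.
  intros H. rewrite phik_eq. unfold LA1, LT1, LA2, LT2. rewrite inv_pow_sub by auto.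
  unfold S3. f_equal. f_equal; f_equal; ring.
Qed.

Lemma pow_le_pow j n : (j <= n)%nat -> 3 ^ j <= 3 ^ n.
Proof. intros. apply Rle_pow; [lra|auto]. Qed.

Lemma A_bounds t z n d : 0 <= t <= 1 -> Rabs (snd z) <= d ->
  Rabs (LA1 z n) <= d / 3 ^ n /\ Rabs (LA2 t z n) <= d / 3 ^ n.
Proof.
  intros Ht Hz. pose proof (pow3_pos n).
  unfold LA1, LA2. rewrite !Rabs_mult, Rabs_inv, (Rabs_right (3^n)) by lra.
  rewrite (Rabs_right t) by lra.
  split.
  - unfold Rdiv. rewrite Rmult_comm. apply Rmult_le_compat_r. left; apply Rinv_0_lt_compat; lra. lra.
  - assert (0 <= / 3 ^ n * Rabs (snd z)) by (apply Rmult_le_pos; [left; apply Rinv_0_lt_compat; lra| apply Rabs_pos]).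
    assert (/ 3 ^ n * Rabs (snd z) <= d / 3 ^ n).
    { unfold Rdiv. rewrite Rmult_comm. apply Rmult_le_compat_r. left; apply Rinv_0_lt_compat; lra. lra. }
    nra.
Qed.

Lemma scaled_bound j n a d : (j <= n)%nat -> 0 <= d -> Rabs a <= d / 3 ^ n -> Rabs (3 ^ j * a) <= d.
Proof.
  intros Hj Hd Ha. rewrite Rabs_mult, (Rabs_right (3^j)) by (left; apply pow3_pos).
  pose proof (pow_le_pow j n Hj). pose proof (pow3_pos j). pose proof (pow3_pos n).
  assert (Rabs a * 3 ^ n <= d) by (apply (Rmult_le_reg_r (/ 3 ^ n)); [apply Rinv_0_lt_compat; lra|];
     rewrite Rmult_assoc, Rinv_r, Rmult_1_r by lra; exact Ha).
  pose proof (Rabs_pos a). nra.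
Qed.

Definition Ccube (u : Cpx) : Cpx := Cmul u (Cmul u u).

Lemma E_triple a th : E (3 * a) (3 * th) = Ccube (E a th).
Proof.
  unfold Ccube. rewrite !E_mul. f_equal; ring.
Qed.

Definition Fc (s p : Cpx) : Cpx :=
  Cadd (Cscale 3 (Cmul p (Csub Defs.C1 s))) (Cmul s (Cadd (Csub (Cmul s s) (Cscale 3 s)) (3, 0))).

Lemma cube_identity u v :
  Cadd Defs.C1 (Cadd (Ccube u) (Ccube v)) = Fc (Cadd Defs.C1 (Cadd u v)) (Cmul u v).
Proof.
  destruct u as [u1 u2], v as [v1 v2].
  unfold Ccube, Fc, Cadd, Cmul, Csub, Cscale, Defs.C1; simpl. f_equal; ring.
Qed.

Lemma S3_triple a1 th1 a2 th2 :
  S3 (3 * a1) (3 * th1) (3 * a2) (3 * th2) = Fc (S3 a1 th1 a2 th2) (Cmul (E a1 th1) (E a2 th2)).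
Proof. unfold S3. rewrite !E_triple. apply cube_identity. Qed.

Lemma Fc_ge s p : Cnorm s <= 1 ->
  3 * Cnorm p * (1 - Cnorm s) - Cnorm s * (Cnorm s * Cnorm s + 3 * Cnorm s + 3) <= Cnorm (Fc s p).
Proof.
  intros Hs. unfold Fc.
  eapply Rle_trans; [|apply Cnorm_add_ge].
  rewrite Cnorm_scale, Cnorm_mul, Cnorm_mul, (Rabs_right 3) by lra.
  pose proof (Cnorm_sub_ge Defs.C1 s). rewrite Cnorm_C1 in H.
  pose proof (Cnorm_nonneg p). pose proof (Cnorm_nonneg s).
  assert (Cnorm (Cadd (Csub (Cmul s s) (Cscale 3 s)) (3, 0)) <= Cnorm s * Cnorm s + 3 * Cnorm s + 3).
  { eapply Rle_trans. apply Cnorm_add. rewrite Cnorm_real, (Rabs_right 3) by lra.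
    eapply Rle_trans. apply Rplus_le_compat_r. apply Cnorm_sub_le.
    rewrite Cnorm_mul, Cnorm_scale, (Rabs_right 3) by lra. lra. }
  assert (3 * Cnorm p * (1 - Cnorm s) <= 3 * (Cnorm p * Cnorm (Csub Defs.C1 s))) by nra.
  assert (Cnorm s * Cnorm (Cadd (Csub (Cmul s s) (Cscale 3 s)) (3, 0)) <= Cnorm s * (Cnorm s * Cnorm s + 3 * Cnorm s + 3)) by (apply Rmult_le_compat_l; lra).
  lra.
Qed.

Definition dl : R := 1 / 10000.

Lemma S3_comm a1 th1 a2 th2 : S3 a1 th1 a2 th2 = S3 a2 th2 a1 th1.
Proof. unfold S3, Cadd; simpl; f_equal; ring. Qed.

Lemma chain_w a1 th1 a2 th2 e j :
  Cnorm (S3 a1 th1 a2 th2) + Rabs (exp a1 - 1) + Rabs (exp a2 - 1) <= e -> e < 1 ->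
  exists w, (1 - e) * Rabs w <= 2 * e + e * e /\ Dq (3 ^ (S j) * th1) <= 9 ^ j * (w * w * (3 + Rabs w)).
Proof.
  intros He He1.
  pose proof (perturb a1 a2 th1 th2). fold (S3 a1 th1 a2 th2) in H.
  exists (1 + 2 * cos th1). split.
  - apply (near_zero th1 th2 e); lra.
  - replace (3 ^ S j * th1) with (3 ^ j * (3 * th1)) by (simpl; ring).
    eapply Rle_trans. apply Dq_pow.
    apply Rmult_le_compat_l. left; apply pow_lt; lra.
    rewrite Dq3_eq. pose proof (Rle_abs (1 + 2 * cos th1)). simpl.
    pose proof (Rle_0_sqr (1 + 2 * cos th1)). unfold Rsqr in *.
    assert (3 - (1 + 2 * cos th1) <= 3 + Rabs (1 + 2 * cos th1)).
    { pose proof (Rle_abs (- (1 + 2 * cos th1))). rewrite Rabs_Ropp in H2. lra. }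
    replace ((1 + 2 * cos th1) * ((1 + 2 * cos th1) * 1)) with ((1 + 2 * cos th1) * (1 + 2 * cos th1)) by ring.
    apply Rmult_le_compat_l; lra.
Qed.

Lemma chain_w2 a1 th1 a2 th2 e j :
  Cnorm (S3 a1 th1 a2 th2) + Rabs (exp a1 - 1) + Rabs (exp a2 - 1) <= e -> e < 1 ->
  exists w, (1 - e) * Rabs w <= 2 * e + e * e /\ Dq (3 ^ (S j) * th2) <= 9 ^ j * (w * w * (3 + Rabs w)).
Proof.
  intros He He1. rewrite S3_comm in He. apply (chain_w a2 th2 a1 th1 e j); lra.
Qed.

Lemma exp_le a : Rabs a <= dl -> exp a <= 1 + 2 * dl /\ Rabs (exp a - 1) <= 2 * dl.
Proof.
  intros H. unfold dl in *. assert (Rabs a <= 1/2) by lra.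
  pose proof (exp_sub1 a H0). split.
  - pose proof (Rle_abs (exp a - 1)). lra.
  - lra.
Qed.

Lemma U_bound a th B : Rabs a <= dl -> sqrt (Dq th) <= B ->
  Cnorm (Csub (E a th) Defs.C1) <= (1 + 2 * dl) * B + 2 * dl.
Proof.
  intros Ha HB. destruct (exp_le a Ha) as [H1 H2].
  eapply Rle_trans. apply E_sub1.
  pose proof (sqrt_pos (Dq th)). pose proof (exp_pos a).
  assert (exp a * sqrt (Dq th) <= (1 + 2 * dl) * B).
  { apply Rmult_le_compat; lra. }
  lra.
Qed.

Lemma S3_ge_E a1 th1 a2 th2 :
  3 - Cnorm (Csub (E a1 th1) Defs.C1) - Cnorm (Csub (E a2 th2) Defs.C1) <= Cnorm (S3 a1 th1 a2 th2).
Proof. apply S3_ge. Qed.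

Lemma sqrt_le_of a b : 0 <= b -> a <= b * b -> sqrt a <= b.
Proof.
  intros Hb Ha. destruct (Rle_dec 0 a).
  - apply le_of_sq; auto. rewrite sqrt_sqrt; auto.
  - rewrite sqrt_neg_0 by lra. auto.
Qed.

Lemma pow9 j : 9 ^ j = 3 ^ j * 3 ^ j.
Proof. replace 9 with (3 * 3) by ring. apply Rpow_mult_distr. Qed.

Lemma one_step a1 th1 a2 th2 :
  Rabs a1 <= dl -> Rabs a2 <= dl -> Cnorm (S3 a1 th1 a2 th2) <= 1/3 ->
  3 * (1 - 2 * dl) * (1 - Cnorm (S3 a1 th1 a2 th2)) -
  Cnorm (S3 a1 th1 a2 th2) * (Cnorm (S3 a1 th1 a2 th2) * Cnorm (S3 a1 th1 a2 th2) + 3 * Cnorm (S3 a1 th1 a2 th2) + 3)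
  <= Cnorm (S3 (3 * a1) (3 * th1) (3 * a2) (3 * th2)).
Proof.
  intros H1 H2 H3. rewrite S3_triple.
  eapply Rle_trans; [|apply Fc_ge; lra].
  rewrite Cnorm_mul, !Cnorm_E, <- exp_plus.
  pose proof (exp_ineq1_le (a1 + a2)).
  pose proof (Rle_abs a1); pose proof (Rle_abs (-a1)); pose proof (Rle_abs a2); pose proof (Rle_abs (-a2)).
  rewrite Rabs_Ropp in *. unfold dl in *.
  set (s := Cnorm (S3 a1 th1 a2 th2)) in *.
  assert (0 <= s) by apply Cnorm_nonneg.
  assert (1 - 2 * (1/10000) <= exp (a1 + a2)) by lra.
  assert (0 <= 1 - s) by lra.
  assert (3 * (1 - 2 * (1 / 10000)) * (1 - s) <= 3 * exp (a1 + a2) * (1 - s)) by nra.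
  lra.
Qed.

Section Lev.
Variable t : R.
Variable z : Cpx.
Hypothesis Ht : 0 <= t <= 1.
Hypothesis Hz : Rabs (snd z) <= dl.

Definition Nk k := Cnorm (phik t k z).

Lemma dl_pos : 0 < dl.
Proof. unfold dl; lra. Qed.

Lemma Abnd n : Rabs (LA1 z n) <= dl / 3 ^ n /\ Rabs (LA2 t z n) <= dl / 3 ^ n.
Proof. apply A_bounds; auto. Qed.

Lemma divpow_le n : dl / 3 ^ n <= dl.
Proof.
  pose proof (pow3_pos n). pose proof dl_pos.
  assert (1 <= 3 ^ n) by (replace 1 with (3 ^ 0) by reflexivity; apply pow_le_pow; lia).
  unfold Rdiv. assert (/ 3 ^ n <= 1) by (rewrite <- Rinv_1; apply Rinv_le_contravar; lra). nra.
Qed.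

Lemma e_bound n :
  Cnorm (S3 (LA1 z n) (LT1 z n) (LA2 t z n) (LT2 t z n)) + Rabs (exp (LA1 z n) - 1) + Rabs (exp (LA2 t z n) - 1)
  <= Nk n + 4 * (dl / 3 ^ n).
Proof.
  destruct (Abnd n) as [H1 H2]. pose proof (divpow_le n).
  assert (dl <= 1/2) by (unfold dl; lra).
  pose proof (exp_sub1 (LA1 z n) ltac:(lra)). pose proof (exp_sub1 (LA2 t z n) ltac:(lra)).
  unfold Nk. rewrite phik_eq. lra.
Qed.

Lemma pow_ratio j n : (j <= n)%nat -> 3 ^ j * (dl / 3 ^ n) <= dl.
Proof.
  intros H. pose proof (pow_le_pow j n H). pose proof (pow3_pos n). pose proof (pow3_pos j).
  pose proof dl_pos. unfold Rdiv.
  replace (3 ^ j * (dl * / 3 ^ n)) with (dl * (3 ^ j / 3 ^ n)) by (unfold Rdiv; ring).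
  assert (3 ^ j / 3 ^ n <= 1).
  { unfold Rdiv. apply (Rmult_le_reg_r (3 ^ n)); auto. rewrite Rmult_assoc, Rinv_l by lra. lra. }
  nra.
Qed.

Lemma small_level n j : (1 <= j <= n)%nat -> Nk n <= 1/20 ->
  3 - 2 * ((1 + 2 * dl) * (3 ^ j * (4/3 * Nk n) + 6 * dl) + 2 * dl) <= Nk (n - j).
Proof.
  intros Hj Hs.
  destruct j as [|j']; [lia|].
  set (e := Nk n + 4 * (dl / 3 ^ n)).
  pose proof (e_bound n) as Heb. fold e in Heb.
  pose proof (divpow_le n). pose proof (pow3_pos n). pose proof dl_pos.
  assert (0 <= dl / 3 ^ n) by (unfold Rdiv; apply Rmult_le_pos; [lra| left; apply Rinv_0_lt_compat; lra]).
  assert (He0 : 0 <= Nk n) by apply Cnorm_nonneg.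
  assert (He : e <= 1/20 + 4 * dl) by (unfold e; lra).
  assert (He1 : e < 1) by (unfold dl in He; lra).
  assert (He2 : 0 <= e) by (unfold e; lra).
  assert (Key : forall w th, (1 - e) * Rabs w <= 2 * e + e * e ->
             Dq (3 ^ S j' * th) <= 9 ^ j' * (w * w * (3 + Rabs w)) ->
             sqrt (Dq (3 ^ S j' * th)) <= 3 ^ S j' * (4/3 * Nk n) + 6 * dl).
  { intros w th Hw HD.
    assert (Hwa : Rabs w <= 2.2 * e).
    { assert ((1 - e) * Rabs w <= (1 - e) * (2.2 * e)) by (unfold dl in He; nra).
      apply (Rmult_le_reg_l (1 - e)); lra. }
    pose proof (Rabs_pos w).
    assert (Hw2 : w * w * (3 + Rabs w) <= 16 * (e * e)).
    { replace (w * w) with (Rabs w * Rabs w) by (rewrite <- Rabs_mult; apply Rabs_right; apply Rle_ge, Rle_0_sqr).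
      assert (Rabs w * Rabs w <= (2.2 * e) * (2.2 * e)) by (apply Rmult_le_compat; lra).
      assert (3 + Rabs w <= 3.12) by (unfold dl in He; lra).
      assert (0 <= Rabs w * Rabs w) by nra.
      assert (Rabs w * Rabs w * (3 + Rabs w) <= (2.2 * e) * (2.2 * e) * 3.12) by (apply Rmult_le_compat; lra).
      nra. }
    pose proof (pow3_pos j').
    assert (HD2 : Dq (3 ^ S j' * th) <= (4 * 3 ^ j' * e) * (4 * 3 ^ j' * e)).
    { eapply Rle_trans. apply HD. rewrite pow9.
      replace ((4 * 3 ^ j' * e) * (4 * 3 ^ j' * e)) with (3 ^ j' * 3 ^ j' * (16 * (e * e))) by ring.
      apply Rmult_le_compat_l. nra. auto. }
    eapply Rle_trans. apply (sqrt_le_of _ (4 * 3 ^ j' * e)). apply Rmult_le_pos; [apply Rmult_le_pos; lra | lra]. exact HD2.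
    pose proof (pow_ratio (S j') n ltac:(lia)).
    unfold e. replace (3 ^ S j') with (3 * 3 ^ j') in * by reflexivity.
    nra. }
  change (Nk (n - S j')) with (Cnorm (phik t (n - S j') z)). rewrite phik_level by lia.
  eapply Rle_trans; [|apply S3_ge_E].
  destruct (Abnd n) as [Ha1 Ha2].
  assert (HA1 : Rabs (3 ^ S j' * LA1 z n) <= dl) by (apply scaled_bound with n; [lia|lra|auto]).
  assert (HA2 : Rabs (3 ^ S j' * LA2 t z n) <= dl) by (apply scaled_bound with n; [lia|lra|auto]).
  destruct (chain_w _ _ _ _ e j' Heb He1) as [w1 [Hw1 HD1]].
  destruct (chain_w2 _ _ _ _ e j' Heb He1) as [w2 [Hw2 HD2]].
  pose proof (U_bound _ _ _ HA1 (Key w1 _ Hw1 HD1)).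
  pose proof (U_bound _ _ _ HA2 (Key w2 _ Hw2 HD2)).
  lra.
Qed.

End Lev.

Fixpoint Pr (g : nat -> R) (n : nat) : R :=
  match n with 0 => g 0%nat | S n' => Pr g n' * g (S n') end.
Fixpoint Bk (g : nat -> R) (n L : nat) : R :=
  match L with 0 => g n | S L' => Bk g n L' * g (n - S L')%nat end.

Lemma Pr_split g n L : (S L <= n)%nat -> Pr g n = Pr g (n - S L) * Bk g n L.
Proof.
  revert n. induction L; intros n H.
  - destruct n as [|n']; [lia|]. simpl. replace (n' - 0)%nat with n' by lia. reflexivity.
  - rewrite (IHL n) by lia.
    replace (n - S L)%nat with (S (n - S (S L)))%nat by lia. simpl Pr.
    replace (S (n - S (S L)))%nat with (n - S L)%nat by lia. simpl Bk. ring.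
Qed.

Lemma Bk_ext g1 g2 n L : (forall j, (j <= L)%nat -> g1 (n - j)%nat = g2 (n - j)%nat) ->
  Bk g1 n L = Bk g2 n L.
Proof.
  induction L; intros H; simpl.
  - specialize (H 0%nat ltac:(lia)). rewrite Nat.sub_0_r in H. auto.
  - rewrite IHL by (intros; apply H; lia). rewrite H by lia. reflexivity.
Qed.

Lemma Bk_lb g n L : 0 <= g n -> (forall j, (1 <= j <= L)%nat -> 3 <= g (n - j)%nat) ->
  g n * 3 ^ L <= Bk g n L.
Proof.
  induction L; intros H0 H; simpl.
  - lra.
  - pose proof (IHL H0 ltac:(intros; apply H; lia)).
    specialize (H (S L) ltac:(lia)).
    pose proof (pow_lt 3 L ltac:(lra)).
    assert (0 <= g n * 3 ^ L) by nra. nra.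
Qed.

Lemma find_L q X n : 0 < q -> 9 * q <= X -> X < 3 ^ n * q ->
  exists L, (2 <= L)%nat /\ (L < n)%nat /\ 3 ^ L * q <= X /\ X < 3 ^ (S L) * q.
Proof.
  intros Hq H9. induction n; intros Hn.
  - simpl in Hn. lra.
  - destruct (Rle_dec (3 ^ n * q) X) as [Hle|Hgt].
    + exists n. split; [|split; [lia| split; auto]].
      destruct n as [|[|n]]; [simpl in *; lra| simpl in *; lra| lia].
    + destruct (IHn ltac:(lra)) as [L HL]. exists L. intuition lia.
Qed.

Section Blk.
Variable t : R.
Variable z : Cpx.
Hypothesis Ht : 0 <= t <= 1.
Hypothesis Hz : Rabs (snd z) <= dl.

Lemma moderate_poly e : 1/20 <= e <= 1/3 ->
  1 <= 9 * e * (3 * (1 - 2 * dl) * (1 - e) - e * (e * e + 3 * e + 3)).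
Proof.
  intros He. unfold dl.
  assert (0 <= (e - 1/20) * (1/3 - e)) by nra.
  nra.
Qed.

Lemma moderate_poly2 e : 0 <= e <= 1/3 ->
  1/2 <= 3 * (1 - 2 * dl) * (1 - e) - e * (e * e + 3 * e + 3).
Proof. intros He. unfold dl. nra. Qed.

Lemma block n : (1 <= n)%nat -> Nk t z n < 1/3 ->
  exists L, (1 <= L)%nat /\ (forall j, (1 <= j <= L)%nat -> (j <= n)%nat -> 1/3 <= Nk t z (n - j)) /\
   ((L <= n)%nat -> 1 <= Bk (fun k => 3 * Nk t z k) n L).
Proof.
  intros Hn Hs.
  pose proof (Cnorm_nonneg (phik t n z)) as Hnn. fold (Nk t z n) in Hnn.
  destruct (Rle_dec (Nk t z n) (1/20)) as [Hsm|Hmd].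
  -
    set (q := 4/3 * Nk t z n).
    assert (Hlev : forall j, (1 <= j <= n)%nat -> 3 ^ j * q <= 0.9 ->
                   3 - 2 * ((1 + 2 * dl) * (0.9 + 6 * dl) + 2 * dl) <= Nk t z (n - j)).
    { intros j Hj Hq. pose proof (small_level t z Ht Hz n j Hj Hsm). fold q in H.
      unfold dl in *. lra. }
    destruct (Rle_dec (3 ^ n * q) 0.9) as [Htr|Hut].
    + exists (S n). split; [lia|split].
      * intros j Hj Hjn. eapply Rle_trans; [|apply Hlev; [lia|]].
        unfold dl; lra.
        pose proof (pow_le_pow j n Hjn). unfold q in *. nra.
      * intros; lia.
    + destruct (Req_dec (Nk t z n) 0) as [H0|H0].
      { exfalso. unfold q in Hut. rewrite H0 in Hut. lra. }
      assert (Hq : 0 < q) by (unfold q; lra).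
      destruct (find_L q 0.9 n Hq ltac:(unfold q; lra) ltac:(lra)) as [L [HL2 [HLn [HL1 HL3]]]].
      exists L. split; [lia|split].
      * intros j Hj Hjn. eapply Rle_trans; [|apply Hlev; [lia|]].
        unfold dl; lra.
        pose proof (pow_le_pow j L ltac:(lia)). nra.
      * intros _. destruct L as [|[|L'']]; [lia|lia|].
        simpl Bk.
        set (g := fun k => 3 * Nk t z k).
        assert (Hb : g n * 3 ^ L'' <= Bk g n L'').
        { apply Bk_lb. unfold g; lra.
          intros j Hj. unfold g. assert (3 ^ j * q <= 0.9).
          { pose proof (pow_le_pow j (S (S L'')) ltac:(lia)). nra. }
          pose proof (Hlev j ltac:(lia) H). unfold dl in *. lra. }
        assert (HLm1 : 3 ^ (S L'') * q <= 0.3).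
        { replace (3 ^ S (S L'')) with (3 * 3 ^ S L'') in HL1 by reflexivity. lra. }
        pose proof (Hlev (S L'') ltac:(lia) ltac:(lra)) as Hf1.
        pose proof (Hlev (S (S L'')) ltac:(lia) HL1) as Hf2.
        pose proof (small_level t z Ht Hz n (S L'') ltac:(lia) Hsm) as Hf1'. fold q in Hf1'.
        assert (Hf1b : 2.39 <= Nk t z (n - S L'')) by (unfold dl in *; lra).
        assert (Hf2b : 1.19 <= Nk t z (n - S (S L''))) by (unfold dl in *; lra).
        cbv beta.
        assert (Hpow : 0.9 < 27 * (3 ^ L'' * q)).
        { replace (3 ^ S (S (S L''))) with (27 * 3 ^ L'') in HL3 by (simpl; ring). lra. }
        unfold q in Hpow.
        pose proof (pow_lt 3 L'' ltac:(lra)).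
        assert (Hgn : g n = 3 * Nk t z n) by reflexivity.
        assert (0.025 <= Nk t z n * 3 ^ L'') by lra.
        assert (0.075 <= Bk g n L'') by nra.
        assert (0.075 * (3 * 2.39) <= Bk g n L'' * (3 * Nk t z (n - S L''))) by (apply Rmult_le_compat; lra).
        assert (0.075 * (3 * 2.39) * (3 * 1.19) <= Bk g n L'' * (3 * Nk t z (n - S L'')) * (3 * Nk t z (n - S (S L''))))
          by (apply Rmult_le_compat; lra).
        lra.
  -
    exists 1%nat. split; [lia|].
    destruct (Abnd t z Ht Hz n) as [Ha1 Ha2].
    pose proof (divpow_le n).
    assert (Hlev : Nk t z (n - 1) >= 3 * (1 - 2 * dl) * (1 - Nk t z n) - Nk t z n * (Nk t z n * Nk t z n + 3 * Nk t z n + 3)).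
    { apply Rle_ge. unfold Nk. rewrite phik_level by lia. rewrite phik_eq. rewrite pow_1.
      apply one_step; try lra. rewrite <- phik_eq. fold (Nk t z n). lra. }
    pose proof (moderate_poly2 (Nk t z n) ltac:(lra)).
    split.
    + intros j Hj _. replace j with 1%nat by lia. lra.
    + intros _. simpl Bk. replace (n - 1)%nat with (n - 1)%nat by reflexivity.
      pose proof (moderate_poly (Nk t z n) ltac:(lra)).
      assert (9 * Nk t z n * (3 * (1 - 2 * dl) * (1 - Nk t z n) - Nk t z n * (Nk t z n * Nk t z n + 3 * Nk t z n + 3))
              <= 9 * Nk t z n * Nk t z (n - 1)) by (apply Rmult_le_compat_l; lra).
      lra.
Qed.

End Blk.

Lemma Cnorm_fold {T} (l : list T) h :
  Cnorm (fold_right Cmul Defs.C1 (map h l)) = fold_right Rmult 1 (map (fun k => Cnorm (h k)) l).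
Proof.
  induction l; simpl. apply Cnorm_C1. rewrite Cnorm_mul, IHl. reflexivity.
Qed.

Lemma fold_app (l1 l2 : list R) : fold_right Rmult 1 (l1 ++ l2) = fold_right Rmult 1 l1 * fold_right Rmult 1 l2.
Proof. induction l1; simpl. ring. rewrite IHl1. ring. Qed.

Lemma Pr_list g m : Pr g m = fold_right Rmult 1 (map g (seq 0 (S m))).
Proof.
  induction m. simpl. ring.
  rewrite seq_S, map_app, fold_app. simpl Pr. rewrite IHm. simpl. ring.
Qed.

Section Main1.
Variable Nf : nat -> R.
Variable k0 : nat.
Definition gf k := if Nat.eqb k k0 then 1 else 3 * Nf k.
Definition ff k := negb (Nat.eqb k k0).

Lemma fold_filter l :
  fold_right Rmult 1 (map gf l) = 3 ^ length (filter ff l) * fold_right Rmult 1 (map Nf (filter ff l)).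
Proof.
  induction l; simpl. ring.
  destruct (Nat.eqb a k0) eqn:Ea.
  - assert (Hf : ff a = false) by (unfold ff; rewrite Ea; reflexivity).
    unfold gf at 1. rewrite Ea, Hf. rewrite IHl. ring.
  - assert (Hf : ff a = true) by (unfold ff; rewrite Ea; reflexivity).
    unfold gf at 1. rewrite Ea, Hf. simpl. rewrite IHl. ring.
Qed.

Lemma len_filter_lt a n : (k0 < a)%nat -> length (filter ff (seq a n)) = n.
Proof.
  revert a. induction n; intros a H; simpl. reflexivity.
  unfold ff at 1. destruct (Nat.eqb_spec a k0). lia. simpl. rewrite IHn by lia. reflexivity.
Qed.

Lemma len_filter_in a n : (a <= k0 < a + n)%nat -> length (filter ff (seq a n)) = (n - 1)%nat.
Proof.
  revert a. induction n; intros a H; simpl. lia.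
  unfold ff at 1. destruct (Nat.eqb_spec a k0).
  - simpl. rewrite len_filter_lt by lia. lia.
  - simpl. rewrite IHn by lia. lia.
Qed.
End Main1.

Section Main2.
Variable t : R.
Variable z : Cpx.
Hypothesis Ht : 0 <= t <= 1.
Hypothesis Hz : Rabs (snd z) <= dl.

Definition ns k := 1/3 <= Nk t z k.

Lemma k0_exists m : exists k0, (k0 <= m)%nat /\ (forall k, (k < k0)%nat -> ns k) /\
  (~ ns k0 \/ forall k, (k <= m)%nat -> ns k).
Proof.
  induction m.
  - exists 0%nat. split; [lia|split]. intros; lia.
    destruct (classic (ns 0)). right. intros k Hk. replace k with 0%nat by lia. auto. left; auto.
  - destruct IHm as [k0 [H1 [H2 H3]]].
    destruct H3 as [H3|H3].
    + exists k0. split; [lia|split; auto].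
    + destruct (classic (ns (S m))).
      * exists k0. split; [lia|split; auto]. right. intros k Hk.
        destruct (Nat.eq_dec k (S m)). subst; auto. apply H3; lia.
      * exists (S m). split; [lia|split]. intros k Hk. apply H3; lia. left; auto.
Qed.

Lemma part1 m : exists k0, (k0 <= m)%nat /\ Cnorm (Phi_except t m k0 z) >= / 3 ^ m.
Proof.
  destruct (k0_exists m) as [k0 [Hk0 [Hbelow Hdisj]]].
  exists k0. split; auto.
  set (g := gf (Nk t z) k0).
  assert (Hnn : forall k, 0 <= Nk t z k) by (intros; apply Cnorm_nonneg).
  assert (Claim : forall N n, (n <= N)%nat -> (n <= m)%nat -> 1 <= Pr g n).
  { induction N; intros n HnN Hnm.
    - replace n with 0%nat by lia. simpl. unfold g, gf.
      destruct (Nat.eqb_spec 0 k0). lra.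
      assert (ns 0).
      { destruct Hdisj as [Hd|Hd]. apply Hbelow; lia. apply Hd; lia. }
      unfold ns in H. lra.
    - destruct (le_lt_dec n N) as [HnN'|HnN']. apply IHN; auto.
      assert (n = S N) by lia. subst n.
      destruct (Nat.eq_dec (S N) k0) as [Heq|Hne].
      + simpl. unfold g at 2, gf. rewrite <- Heq, Nat.eqb_refl.
        pose proof (IHN N ltac:(lia) ltac:(lia)). lra.
      + destruct (classic (ns (S N))) as [Hns|Hns].
        * simpl. unfold g at 2, gf. destruct (Nat.eqb_spec (S N) k0); [contradiction|].
          pose proof (IHN N ltac:(lia) ltac:(lia)). unfold ns in Hns. nra.
        * assert (Hk0lt : (k0 < S N)%nat).
          { destruct (le_lt_dec (S N) k0); [|auto].
            exfalso. assert (S N < k0)%nat by lia. apply Hns, Hbelow; auto. }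
          assert (Hnk0 : ~ ns k0).
          { destruct Hdisj as [Hd|Hd]; [auto | exfalso; apply Hns, Hd; lia]. }
          destruct (block t z Ht Hz (S N) ltac:(lia) ltac:(unfold ns in Hns; lra)) as [L [HL1 [HL2 HL3]]].
          assert (HLlt : (S L <= S N - k0)%nat).
          { destruct (le_lt_dec (S N - k0) L) as [Hc|Hc]; [|lia].
            exfalso. apply Hnk0. specialize (HL2 (S N - k0)%nat ltac:(lia) ltac:(lia)).
            replace (S N - (S N - k0))%nat with k0 in HL2 by lia. exact HL2. }
          rewrite (Pr_split g (S N) L) by lia.
          assert (HB : Bk g (S N) L = Bk (fun k => 3 * Nk t z k) (S N) L).
          { apply Bk_ext. intros j Hj. unfold g, gf. destruct (Nat.eqb_spec (S N - j) k0). lia. reflexivity. }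
          rewrite HB. pose proof (HL3 ltac:(lia)).
          pose proof (IHN (S N - S L)%nat ltac:(lia) ltac:(lia)). nra. }
  pose proof (Claim m m (le_n _) (le_n _)) as Hm.
  rewrite Pr_list in Hm. unfold g in Hm. rewrite fold_filter in Hm.
  rewrite len_filter_in in Hm by lia. replace (S m - 1)%nat with m in Hm by lia.
  unfold Phi_except. rewrite Cnorm_fold.
  fold (ff k0).
  replace (map (fun k : nat => Cnorm (phik t k z)) (filter (ff k0) (seq 0 (S m))))
    with (map (Nk t z) (filter (ff k0) (seq 0 (S m)))) by reflexivity.
  pose proof (pow3_pos m).
  apply Rle_ge. apply (Rmult_le_reg_l (3 ^ m)); auto. rewrite Rinv_r by lra. lra.
Qed.
End Main2.

Lemma S3_diff a1 th1 a2 th2 b1 ph1 b2 ph2 :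
  Cnorm (S3 b1 ph1 b2 ph2) - Cnorm (Csub (E a1 th1) (E b1 ph1)) - Cnorm (Csub (E a2 th2) (E b2 ph2))
  <= Cnorm (S3 a1 th1 a2 th2).
Proof.
  replace (S3 a1 th1 a2 th2) with
    (Cadd (S3 b1 ph1 b2 ph2) (Cadd (Csub (E a1 th1) (E b1 ph1)) (Csub (E a2 th2) (E b2 ph2)))).
  2:{ unfold S3, Cadd, Csub; simpl; f_equal; ring. }
  pose proof (Cnorm_add_ge (S3 b1 ph1 b2 ph2) (Cadd (Csub (E a1 th1) (E b1 ph1)) (Csub (E a2 th2) (E b2 ph2)))).
  pose proof (Cnorm_add (Csub (E a1 th1) (E b1 ph1)) (Csub (E a2 th2) (E b2 ph2))).
  lra.
Qed.

Lemma E_lip a b th ph : Rabs a <= dl -> Rabs b <= dl -> Rabs (th - ph) <= 2 * dl ->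
  Cnorm (Csub (E a th) (E b ph)) <= 7 * dl.
Proof.
  intros Ha Hb Hth.
  replace (Csub (E a th) (E b ph)) with
    (Cadd (Cscale (exp a - exp b) (zeta th)) (Cscale (exp b) (Csub (zeta th) (zeta ph)))).
  2:{ unfold Cadd, Cscale, Csub, E, zeta; simpl; f_equal; ring. }
  eapply Rle_trans. apply Cnorm_add.
  rewrite !Cnorm_scale, Cnorm_zeta.
  destruct (exp_le a Ha) as [Ea1 Ea2]. destruct (exp_le b Hb) as [Eb1 Eb2].
  assert (Rabs (exp a - exp b) <= 4 * dl).
  { replace (exp a - exp b) with ((exp a - 1) - (exp b - 1)) by ring.
    eapply Rle_trans. apply Rabs_triang. rewrite Rabs_Ropp. lra. }
  pose proof (zeta_lip th ph ltac:(unfold dl in *; lra)).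
  rewrite (Rabs_right (exp b)) by (left; apply exp_pos).
  pose proof (exp_pos b). pose proof (Cnorm_nonneg (Csub (zeta th) (zeta ph))).
  assert (exp b * Cnorm (Csub (zeta th) (zeta ph)) <= (1 + 2 * dl) * (2 * dl)) by (apply Rmult_le_compat; lra).
  unfold dl in *. lra.
Qed.

Lemma Nk_lip t z1 z2 k : 0 <= t <= 1 -> Rabs (snd z1) <= dl -> Rabs (snd z2) <= dl ->
  Rabs (fst z1 - fst z2) <= 2 * dl -> Nk t z2 k - 14 * dl <= Nk t z1 k.
Proof.
  intros Ht H1 H2 H3. unfold Nk. rewrite !phik_eq.
  eapply Rle_trans; [|apply S3_diff with (b1 := LA1 z2 k) (ph1 := LT1 z2 k) (b2 := LA2 t z2 k) (ph2 := LT2 t z2 k)].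
  destruct (Abnd t z1 Ht H1 k). destruct (Abnd t z2 Ht H2 k). pose proof (divpow_le k).
  pose proof (pow3_pos k).
  assert (Hr : 0 < / 3 ^ k <= 1).
  { split. apply Rinv_0_lt_compat; lra.
    assert (1 <= 3 ^ k) by (replace 1 with (3 ^ 0) by reflexivity; apply pow_le_pow; lia).
    rewrite <- Rinv_1. apply Rinv_le_contravar; lra. }
  assert (HT1 : Rabs (LT1 z1 k - LT1 z2 k) <= 2 * dl).
  { unfold LT1. replace (- (/ 3 ^ k * fst z1) - - (/ 3 ^ k * fst z2)) with (- (/ 3 ^ k * (fst z1 - fst z2))) by ring.
    rewrite Rabs_Ropp, Rabs_mult, (Rabs_right (/ 3 ^ k)) by lra.
    pose proof (Rabs_pos (fst z1 - fst z2)). nra. }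
  assert (HT2 : Rabs (LT2 t z1 k - LT2 t z2 k) <= 2 * dl).
  { unfold LT2. replace (- (t * (/ 3 ^ k * fst z1)) - - (t * (/ 3 ^ k * fst z2))) with (- (t * (/ 3 ^ k * (fst z1 - fst z2)))) by ring.
    rewrite Rabs_Ropp, !Rabs_mult, (Rabs_right (/ 3 ^ k)) by lra. rewrite (Rabs_right t) by lra.
    pose proof (Rabs_pos (fst z1 - fst z2)).
    assert (/ 3 ^ k * Rabs (fst z1 - fst z2) <= 2 * dl) by nra.
    assert (0 <= / 3 ^ k * Rabs (fst z1 - fst z2)) by nra. nra. }
  pose proof (E_lip (LA1 z1 k) (LA1 z2 k) (LT1 z1 k) (LT1 z2 k) ltac:(lra) ltac:(lra) HT1).
  pose proof (E_lip (LA2 t z1 k) (LA2 t z2 k) (LT2 t z1 k) (LT2 t z2 k) ltac:(lra) ltac:(lra) HT2).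
  lra.
Qed.

Lemma level_D t z k2 D m : 0 <= t <= 1 -> Rabs (snd z) <= dl ->
  (2 <= D)%nat -> (D <= k2)%nat -> (k2 <= m)%nat -> Nk t z k2 < / 3 ^ m ->
  0.128 <= Nk t z (k2 - D).
Proof.
  intros Ht Hz HD HDk Hkm Hs.
  destruct D as [|D']; [lia|].
  set (e := Nk t z k2 + 4 * (dl / 3 ^ k2)).
  pose proof (e_bound t z Ht Hz k2) as Heb. fold e in Heb.
  pose proof (pow3_pos k2). pose proof (pow3_pos m). pose proof (pow3_pos D').
  pose proof dl_pos.
  assert (0 <= dl / 3 ^ k2) by (unfold Rdiv; apply Rmult_le_pos; [lra| left; apply Rinv_0_lt_compat; lra]).
  assert (He0 : 0 <= Nk t z k2) by apply Cnorm_nonneg.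
  assert (Hp1 : 3 ^ D' * Nk t z k2 <= 1/3).
  { pose proof (pow_le_pow (S D') m ltac:(lia)). simpl in H4.
    assert (Nk t z k2 * 3 ^ m <= 1).
    { apply (Rmult_le_reg_r (/ 3 ^ m)). apply Rinv_0_lt_compat; lra.
      rewrite Rmult_assoc, Rinv_r, Rmult_1_l, Rmult_1_r by lra. lra. }
    nra. }
  assert (Hp2 : 3 ^ D' * (dl / 3 ^ k2) <= dl / 3).
  { pose proof (pow_ratio (S D') k2 ltac:(lia)). simpl in H4. lra. }
  assert (HE : 3 ^ D' * e <= 1/3 + 4/3 * dl) by (unfold e; lra).
  assert (H3D : 3 <= 3 ^ D').
  { replace 3 with (3 ^ 1) at 1 by ring. apply pow_le_pow. lia. }
  assert (He2 : 0 <= e) by (unfold e; lra).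
  assert (He : e <= 1/9 + 4/9 * dl) by nra.
  assert (He1 : e < 1) by (unfold dl in He; lra).
  assert (Key : forall w th, (1 - e) * Rabs w <= 2 * e + e * e ->
             Dq (3 ^ S D' * th) <= 9 ^ D' * (w * w * (3 + Rabs w)) ->
             sqrt (Dq (3 ^ S D' * th)) <= 1.4353).
  { intros w th Hw HDq.
    assert (Hwa : Rabs w <= 2.38 * e).
    { assert ((1 - e) * Rabs w <= (1 - e) * (2.38 * e)) by (unfold dl in He; nra).
      apply (Rmult_le_reg_l (1 - e)); lra. }
    pose proof (Rabs_pos w).
    apply sqrt_le_of. lra. eapply Rle_trans. apply HDq.
    rewrite pow9.
    replace (w * w) with (Rabs w * Rabs w) by (rewrite <- Rabs_mult; apply Rabs_right; apply Rle_ge, Rle_0_sqr).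
    assert (HA : 3 ^ D' * Rabs w <= 2.38 * (1/3 + 4/3 * dl)) by nra.
    assert (HB : 3 + Rabs w <= 3 + 2.38 * (1/9 + 4/9 * dl)) by lra.
    assert (0 <= 3 ^ D' * Rabs w) by nra.
    assert ((3 ^ D' * Rabs w) * (3 ^ D' * Rabs w) <= (2.38 * (1/3 + 4/3 * dl)) * (2.38 * (1/3 + 4/3 * dl)))
      by (apply Rmult_le_compat; lra).
    assert ((3 ^ D' * Rabs w) * (3 ^ D' * Rabs w) * (3 + Rabs w) <=
            (2.38 * (1/3 + 4/3 * dl)) * (2.38 * (1/3 + 4/3 * dl)) * (3 + 2.38 * (1/9 + 4/9 * dl)))
      by (apply Rmult_le_compat; nra).
    replace (3 ^ D' * 3 ^ D' * (Rabs w * Rabs w * (3 + Rabs w))) with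
      ((3 ^ D' * Rabs w) * (3 ^ D' * Rabs w) * (3 + Rabs w)) by ring.
    unfold dl in *. lra. }
  change (Nk t z (k2 - S D')) with (Cnorm (phik t (k2 - S D') z)). rewrite phik_level by lia.
  eapply Rle_trans; [|apply S3_ge_E].
  destruct (Abnd t z Ht Hz k2) as [Ha1 Ha2].
  assert (HA1 : Rabs (3 ^ S D' * LA1 z k2) <= dl) by (apply scaled_bound with k2; [lia|lra|auto]).
  assert (HA2 : Rabs (3 ^ S D' * LA2 t z k2) <= dl) by (apply scaled_bound with k2; [lia|lra|auto]).
  destruct (chain_w _ _ _ _ e D' Heb He1) as [w1 [Hw1 HD1]].
  destruct (chain_w2 _ _ _ _ e D' Heb He1) as [w2 [Hw2 HD2]].
  pose proof (U_bound _ _ _ HA1 (Key w1 _ Hw1 HD1)).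
  pose proof (U_bound _ _ _ HA2 (Key w2 _ Hw2 HD2)).
  unfold dl in *. lra.
Qed.

Lemma inv_pow_le a m : (a <= m)%nat -> / 3 ^ m <= / 3 ^ a.
Proof.
  intros H. pose proof (pow3_pos a). pose proof (pow3_pos m).
  apply Rinv_le_contravar; auto. apply pow_le_pow; auto.
Qed.

Lemma no_two t m x0 k1 k2 : 0 <= t <= 1 -> (k1 < k2)%nat -> (k2 <= m)%nat ->
  critical t m x0 dl k1 -> critical t m x0 dl k2 -> False.
Proof.
  intros Ht Hlt Hm [z1 [Hr1 [Hi1 Hc1]]] [z2 [Hr2 [Hi2 Hc2]]].
  unfold Re, Im in *.
  assert (Hz1 : Rabs (snd z1) <= dl) by (apply Rabs_le; lra).
  assert (Hz2 : Rabs (snd z2) <= dl) by (apply Rabs_le; lra).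
  assert (Hx : Rabs (fst z1 - fst z2) <= 2 * dl) by (apply Rabs_le; lra).
  pose proof (Nk_lip t z1 z2 k1 Ht Hz1 Hz2 Hx) as Hlip.
  fold (Nk t z1 k1) in Hc1. fold (Nk t z2 k2) in Hc2.
  destruct (Nat.eq_dec k1 (k2 - 1)) as [Hk|Hk].
  -
    assert (Hm1 : / 3 ^ m <= 1/3).
    { pose proof (inv_pow_le 1 m ltac:(lia)). simpl in H. lra. }
    pose proof (Cnorm_nonneg (phik t k2 z2)). fold (Nk t z2 k2) in H.
    destruct (Abnd t z2 Ht Hz2 k2) as [Ha1 Ha2]. pose proof (divpow_le k2).
    assert (Hlev : Nk t z2 (k2 - 1) >= 3 * (1 - 2 * dl) * (1 - Nk t z2 k2) - Nk t z2 k2 * (Nk t z2 k2 * Nk t z2 k2 + 3 * Nk t z2 k2 + 3)).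
    { apply Rle_ge. unfold Nk. rewrite phik_level by lia. rewrite phik_eq. rewrite pow_1.
      apply one_step; try lra. rewrite <- phik_eq. fold (Nk t z2 k2). lra. }
    pose proof (moderate_poly2 (Nk t z2 k2) ltac:(lra)).
    rewrite <- Hk in Hlev. unfold dl in *. lra.
  - assert (Hm2 : / 3 ^ m <= 1/9).
    { pose proof (inv_pow_le 2 m ltac:(lia)). simpl in H. lra. }
    pose proof (level_D t z2 k2 (k2 - k1) m Ht Hz2 ltac:(lia) ltac:(lia) Hm Hc2).
    replace (k2 - (k2 - k1))%nat with k1 in H by lia.
    unfold dl in *. lra.
Qed.


Theorem proposition21 :
  exists delta : R, 0 < delta /\
    forall (t : R), 0 <= t <= 1 -> forall (m : nat),
      (forall z : Cpx, Rabs (Im z) <= delta ->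
         exists k0 : nat, (k0 <= m)%nat /\ Cnorm (Phi_except t m k0 z) >= / 3 ^ m) /\
      (forall (x0 : R) (k1 k2 : nat), (k1 <= m)%nat -> (k2 <= m)%nat ->
         critical t m x0 delta k1 -> critical t m x0 delta k2 -> k1 = k2).
Proof.
  exists dl. split. apply dl_pos.
  intros t Ht m. split.
  - intros z Hz. unfold Im in Hz. apply part1; auto.
  - intros x0 k1 k2 H1 H2 C1 C2.
    destruct (lt_eq_lt_dec k1 k2) as [[Hlt|Heq]|Hgt].
    + exfalso. apply (no_two t m x0 k1 k2); auto.
    + auto.
    + exfalso. apply (no_two t m x0 k2 k1); auto.
Qed.
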